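(* $\mathfrak{ss}_{ac}=\mathfrak d$ and dually $\mathfrak{ss}_{ac}^\perp=\mathfrak b$.
   Context: Let $\mathfrak S$ be the set of all sequences $\mathbf a=\langle a_i:i\in\omega\rangle$ of rational numbers with $a_i\to 0$. Let $[\omega]^\omega_\omega$ denote the set of infinite coinfinite subsets of $\omega$. For infinite $X\subseteq\omega$ with increasing enumeration $\langle i_n\rangle$ write $\sum_X\mathbf a$ for $\sum_n a_{i_n}$. A series is convergent if its partial sums converge to a real number; it is conditional if $\sum_{\{i:a_i>0\}}\mathbf a=\infty$ and $\sum_{\{i:a_i<0\}}\mathbf a=-\infty$; conditionally convergent if convergent and conditional; absolutely convergent if convergent and not conditional. Let $\mathfrak S_{cc}$ be the set of $\mathbf a\in\mathfrak S$ with $\sum\mathbf a$ conditionally convergent. $\mathfrak{ss}_{ac}$ is the least cardinality of a family $\mathcal X\subseteq[\omega]^\omega_\omega$ such that for every $\mathbf a\in\mathfrak S_{cc}$ there is $X\in\mathcal X$ with $\sum_X\mathbf a$ absolutely convergent; $\mathfrak{ss}_{ac}^\perp$ is the least cardinality of a family $\mathcal A\subseteq\mathfrak S_{cc}$ such that no $X\in[\omega]^\omega_\omega$ makes $\sum_X\mathbf a$ absolutely convergent for all $\mathbf a\in\mathcal A$. $\mathfrak b$ and $\mathfrak d$ are the bounding and dominating numbers. *)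

(* Defs.v *)
From Stdlib Require Import Reals QArith Qreals Lra Lia.
Open Scope R_scope.

Definition infinite_set (X : nat -> bool) : Prop :=
  forall n : nat, exists m : nat, (n <= m)%nat /\ X m = true.
Definition coinfinite_set (X : nat -> bool) : Prop :=
  forall n : nat, exists m : nat, (n <= m)%nat /\ X m = false.
Definition inf_coinf (X : nat -> bool) : Prop := infinite_set X /\ coinfinite_set X.

Definition enumerates (X : nat -> bool) (e : nat -> nat) : Prop :=
  (forall n, (e n < e (S n))%nat) /\ (forall i, X i = true <-> exists n, e n = i).

Definition partial_sums (b : nat -> R) (n : nat) : R := sum_f_R0 b n.

Definition convergent_series (b : nat -> R) : Prop :=
  exists l : R, Un_cv (partial_sums b) l.

Definition pos_terms (b : nat -> R) (i : nat) : R := if Rlt_dec 0 (b i) then b i else 0.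
Definition neg_terms (b : nat -> R) (i : nat) : R := if Rlt_dec (b i) 0 then b i else 0.
Definition conditional_series (b : nat -> R) : Prop :=
  cv_infty (partial_sums (pos_terms b)) /\
  cv_infty (fun n => - partial_sums (neg_terms b) n).

Definition cond_convergent (b : nat -> R) : Prop :=
  convergent_series b /\ conditional_series b.
Definition abs_convergent (b : nat -> R) : Prop :=
  convergent_series b /\ ~ conditional_series b.

Definition sub_abs_convergent (X : nat -> bool) (a : nat -> R) : Prop :=
  exists e : nat -> nat, enumerates X e /\ abs_convergent (fun n => a (e n)).

Definition rational_seq (a : nat -> R) : Prop := forall i, exists q : Q, a i = Q2R q.
Definition in_S (a : nat -> R) : Prop := rational_seq a /\ Un_cv a 0.
Definition in_Scc (a : nat -> R) : Prop := in_S a /\ cond_convergent a.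

Definition ss_ac_family (XX : (nat -> bool) -> Prop) : Prop :=
  (forall X, XX X -> inf_coinf X) /\
  (forall a, in_Scc a -> exists X, XX X /\ sub_abs_convergent X a).
Definition ss_ac_perp_family (A : (nat -> R) -> Prop) : Prop :=
  (forall a, A a -> in_Scc a) /\
  ~ (exists X, inf_coinf X /\ forall a, A a -> sub_abs_convergent X a).

Definition dominates (g f : nat -> nat) : Prop :=
  exists N, forall n, (N <= n)%nat -> (f n <= g n)%nat.
Definition dominating_family (D : (nat -> nat) -> Prop) : Prop :=
  forall f, exists g, D g /\ dominates g f.
Definition unbounded_family (B : (nat -> nat) -> Prop) : Prop :=
  ~ (exists g, forall f, B f -> dominates g f).

Definition le_card {A B : Type} (F : A -> Prop) (G : B -> Prop) : Prop :=
  exists h : A -> B, (forall x, F x -> G (h x)) /\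
    (forall x y, F x -> F y -> h x = h y -> x = y).

(* min{|F| : P F} <= min{|G| : Q G} *)
Definition charac_le {A B : Type} (P : (A -> Prop) -> Prop) (Q : (B -> Prop) -> Prop) : Prop :=
  forall G, Q G -> exists F, P F /\ le_card F G.

Definition charac_eq {A B : Type} (P : (A -> Prop) -> Prop) (Q : (B -> Prop) -> Prop) : Prop :=
  charac_le P Q /\ charac_le Q P.

(* Main.v *)
Require Import Defs.
From Stdlib Require Import Reals QArith Qreals Lra Lia ZArith.
From Stdlib Require Import Classical ClassicalEpsilon.
Open Scope R_scope.

Lemma sum_S (u : nat -> R) n : sum_f_R0 u (S n) = sum_f_R0 u n + u (S n).
Proof. reflexivity. Qed.

Lemma sum_mono (u : nat -> R) : (forall k, 0 <= u k) ->
  forall n m, (n <= m)%nat -> sum_f_R0 u n <= sum_f_R0 u m.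
Proof.
  intros Hu n m Hnm. induction Hnm. lra. rewrite sum_S. specialize (Hu (S m)). lra.
Qed.

Lemma sum_nonneg (u : nat -> R) : (forall k, 0 <= u k) -> forall n, 0 <= sum_f_R0 u n.
Proof. intros Hu n. induction n. simpl; auto. rewrite sum_S. specialize (Hu (S n)); lra. Qed.

Lemma sum_le (u v : nat -> R) : (forall k, u k <= v k) -> forall n, sum_f_R0 u n <= sum_f_R0 v n.
Proof. intros H n. induction n. simpl; auto. rewrite !sum_S. specialize (H (S n)); lra. Qed.

Lemma mono_cv_infty (u : nat -> R) : (forall n m, (n <= m)%nat -> u n <= u m) ->
  (forall M, exists n, M < u n) -> cv_infty u.
Proof.
  intros Hm Hu M. destruct (Hu M) as [n Hn]. exists n. intros k Hk.
  specialize (Hm _ _ Hk). lra.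
Qed.

Lemma pos_neg_abs (b : nat -> R) i :
  Rabs (b i) = pos_terms b i - neg_terms b i /\ b i = pos_terms b i + neg_terms b i
  /\ 0 <= pos_terms b i /\ neg_terms b i <= 0 /\ pos_terms b i <= Rabs (b i).
Proof.
  unfold pos_terms, neg_terms.
  destruct (Rlt_dec 0 (b i)); destruct (Rlt_dec (b i) 0).
  - lra.
  - rewrite Rabs_right; lra.
  - rewrite Rabs_left; lra.
  - assert (b i = 0) by lra. rewrite H, Rabs_R0. lra.
Qed.

Lemma sum_abs_eq (b : nat -> R) n :
  sum_f_R0 (fun k => Rabs (b k)) n = sum_f_R0 (pos_terms b) n - sum_f_R0 (neg_terms b) n
  /\ sum_f_R0 b n = sum_f_R0 (pos_terms b) n + sum_f_R0 (neg_terms b) n.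
Proof.
  induction n.
  - simpl. destruct (pos_neg_abs b 0) as [A [B _]]. lra.
  - rewrite !sum_S. destruct (pos_neg_abs b (S n)) as [A [B _]]. lra.
Qed.

Lemma cond_of_unbounded (b : nat -> R) : convergent_series b ->
  (forall M, exists n, M < sum_f_R0 (fun k => Rabs (b k)) n) -> conditional_series b.
Proof.
  intros [l Hl] Hu.
  destruct (Hl 1 ltac:(lra)) as [N1 HN1].
  assert (Habs : forall k, 0 <= Rabs (b k)) by (intros; apply Rabs_pos).
  assert (Hp : forall k, 0 <= pos_terms b k) by (intro k; apply (pos_neg_abs b k)).
  assert (Hn : forall k, 0 <= - neg_terms b k) by (intro k; destruct (pos_neg_abs b k) as [_ [_ [_ [H _]]]]; lra).
  split.
  - apply mono_cv_infty. apply sum_mono; auto.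
    intros M. destruct (classic (exists n, M < partial_sums (pos_terms b) n)) as [H|H]; auto.
    exfalso.
    assert (HM : forall n, partial_sums (pos_terms b) n <= M).
    { intro n. apply Rnot_lt_le. intro. apply H. eauto. }
    destruct (Hu (2*M - l + 1)) as [n0 Hn0].
    set (n' := Nat.max n0 N1).
    assert (A1 := sum_mono _ Habs n0 n' ltac:(lia)).
    assert (A2 := HN1 n' ltac:(lia)). unfold Rdist, partial_sums in *.
    apply Rabs_def2 in A2.
    destruct (sum_abs_eq b n') as [E1 E2]. specialize (HM n'). unfold partial_sums in HM. lra.
  - apply mono_cv_infty.
    { intros n m Hnm. unfold partial_sums. induction Hnm. lra. rewrite sum_S. specialize (Hn (S m)). lra. }
    intros M. destruct (classic (exists n, M < - partial_sums (neg_terms b) n)) as [H|H]; auto.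
    exfalso.
    assert (HM : forall n, - partial_sums (neg_terms b) n <= M).
    { intro n. apply Rnot_lt_le. intro. apply H. eauto. }
    destruct (Hu (2*M + l + 1)) as [n0 Hn0].
    set (n' := Nat.max n0 N1).
    assert (A1 := sum_mono _ Habs n0 n' ltac:(lia)).
    assert (A2 := HN1 n' ltac:(lia)). unfold Rdist, partial_sums in *.
    apply Rabs_def2 in A2.
    destruct (sum_abs_eq b n') as [E1 E2]. specialize (HM n'). lra.
Qed.

Lemma geom_sum n : sum_f_R0 (fun k => (/2)^k) n = 2 - (/2)^n.
Proof. induction n. simpl; lra. rewrite sum_S, IHn. simpl. lra. Qed.

Lemma abs_conv_of_geom (b : nat -> R) :
  (exists N, forall n, (N <= n)%nat -> Rabs (b n) <= (/2)^n) -> abs_convergent b.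
Proof.
  intros [N HN].
  set (A := fun n => sum_f_R0 (fun k => Rabs (b k)) n).
  assert (Habs : forall k, 0 <= Rabs (b k)) by (intros; apply Rabs_pos).
  assert (HG : forall k, 0 <= (/2)^k) by (intros; apply pow_le; lra).
  assert (HB1 : forall n, A n <= A N + sum_f_R0 (fun k => (/2)^k) n).
  { induction n.
    - unfold A. assert (H := sum_mono _ Habs 0 N ltac:(lia)). assert (H2 := sum_nonneg (fun k => (/2)^k) HG 0). lra.
    - destruct (le_lt_dec (S n) N).
      + assert (H := sum_mono _ Habs (S n) N l). assert (H2 := sum_nonneg (fun k => (/2)^k) HG (S n)). unfold A. lra.
      + unfold A in *. rewrite !sum_S. specialize (HN (S n) ltac:(lia)). lra. }
  assert (HB : forall n, A n <= A N + 2).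
  { intro n. specialize (HB1 n). rewrite geom_sum in HB1. assert (0 < (/2)^n) by (apply pow_lt; lra). lra. }
  assert (Hc : { l | Un_cv A l }).
  { apply growing_cv.
    - intro n. unfold A. rewrite sum_S. specialize (Habs (S n)). lra.
    - exists (A N + 2). intros x [i ->]. apply HB. }
  split.
  - destruct (cv_cauchy_2 _ (cauchy_abs _ (cv_cauchy_1 _ Hc))) as [l Hl]. exists l. exact Hl.
  - intros [Hp _]. destruct (Hp (A N + 2)) as [N' HN'].
    specialize (HN' N' (le_n _)). unfold partial_sums in HN'.
    assert (H := sum_le (pos_terms b) (fun k => Rabs (b k)) (fun k => proj2 (proj2 (proj2 (proj2 (pos_neg_abs b k))))) N').
    specialize (HB N'). unfold A in *. lra.
Qed.

Lemma sum_lb (u : nat -> R) (c : R) K d :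
  (forall k, (K < k <= K + d)%nat -> c <= u k) ->
  INR d * c <= sum_f_R0 u (K + d) - sum_f_R0 u K.
Proof.
  induction d; intros H.
  - rewrite Nat.add_0_r. simpl. lra.
  - rewrite Nat.add_succ_r, sum_S, S_INR.
    assert (IH := IHd (fun k Hk => H k ltac:(lia))).
    specialize (H (S (K + d)) ltac:(lia)). lra.
Qed.

Lemma chunk (u : nat -> R) : (forall k, 0 <= u k) ->
  (forall K, exists n, (2*K+2 <= n)%nat /\ forall k, (K < k <= n)%nat -> / (INR n + 2) <= u k) ->
  forall M, exists n, M < sum_f_R0 u n.
Proof.
  intros Hu Hc.
  assert (Hj : forall j, exists n, INR j / 2 <= sum_f_R0 u n).
  { induction j.
    - exists 0%nat. simpl. specialize (Hu 0%nat). lra.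
    - destruct IHj as [K HK]. destruct (Hc K) as [n [Hn Hk]].
      assert (Hd : n = (K + (n - K))%nat) by lia.
      assert (H := sum_lb u (/ (INR n + 2)) K (n - K) ltac:(intros k Hk'; apply Hk; lia)).
      rewrite <- Hd in H. exists n. rewrite S_INR.
      assert (E : INR (n - K) = INR n - INR K) by (apply minus_INR; lia).
      rewrite E in H.
      assert (Hle : 2 * INR K + 2 <= INR n).
      { replace 2 with (INR 2) by (simpl; lra). rewrite <- mult_INR, <- plus_INR. apply le_INR. lia. }
      assert (Hpos : 0 < INR n + 2) by (assert (0 <= INR n) by apply pos_INR; lra).
      set (t := / (INR n + 2)) in *.
      assert (Ht : t * (INR n + 2) = 1) by (unfold t; field; lra).
      assert (Ht0 : 0 < t) by (unfold t; apply Rinv_0_lt_compat; lra).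
      nra. }
  intros M. destruct (INR_unbounded (2*M)) as [j Hj']. destruct (Hj j) as [n Hn].
  exists n. lra.
Qed.

Fixpoint fsum (f : nat -> nat) (n : nat) : nat :=
  match n with O => f 0%nat | S n' => (fsum f n' + f (S n'))%nat end.
Fixpoint cnt (F : nat -> nat) (i j : nat) : nat :=
  match j with O => 0%nat | S j' => (cnt F i j' + (if Nat.leb (F j') i then 1 else 0))%nat end.
Definition mm (f : nat -> nat) (k : nat) : nat := S (cnt (fsum f) k (S k)).
Definition cc (f : nat -> nat) (k : nat) : R := / INR (mm f k).
Definition af (f : nat -> nat) (i : nat) : R :=
  if Nat.even i then cc f (Nat.div2 i) else - cc f (Nat.div2 i).

Lemma fsum_ge f n : (f n <= fsum f n)%nat.
Proof. destruct n; simpl; lia. Qed.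
Lemma fsum_mono f n m : (n <= m)%nat -> (fsum f n <= fsum f m)%nat.
Proof. induction 1; simpl; lia. Qed.

Lemma cnt_le_j F i j : (cnt F i j <= j)%nat.
Proof. induction j; simpl; [lia|]. destruct (Nat.leb _ _); lia. Qed.

Lemma cnt_le_n F i j n : (forall a b, (a <= b)%nat -> (F a <= F b)%nat) ->
  (i < F n)%nat -> (cnt F i j <= n)%nat.
Proof.
  intros Hm Hi. induction j; simpl; [lia|].
  destruct (le_lt_dec n j).
  - specialize (Hm _ _ l). destruct (Nat.leb_spec (F j) i); lia.
  - assert (H := cnt_le_j F i j). destruct (Nat.leb _ _); lia.
Qed.

Lemma cnt_full F i j : (forall n, (n < j)%nat -> (F n <= i)%nat) -> cnt F i j = j.
Proof.
  induction j; intros H; simpl; [lia|].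
  rewrite IHj by (intros; apply H; lia).
  destruct (Nat.leb_spec (F j) i); [lia|]. specialize (H j ltac:(lia)). lia.
Qed.

Lemma cnt_mono_j F i j j' : (j <= j')%nat -> (cnt F i j <= cnt F i j')%nat.
Proof. induction 1; simpl; lia. Qed.

Lemma mm_ge1 f k : (1 <= mm f k)%nat.
Proof. unfold mm; lia. Qed.
Lemma mm_le f k : (mm f k <= k + 2)%nat.
Proof. unfold mm. assert (H := cnt_le_j (fsum f) k (S k)). lia. Qed.
Lemma mm_le_n f k n : (k < fsum f n)%nat -> (mm f k <= n + 1)%nat.
Proof.
  intros H. unfold mm. assert (H' := cnt_le_n (fsum f) k (S k) n (fsum_mono f) H). lia.
Qed.
Lemma mm_big f K k : (K + fsum f K <= k)%nat -> (K + 2 <= mm f k)%nat.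
Proof.
  intros H. unfold mm.
  assert (H1 := cnt_mono_j (fsum f) k (S K) (S k) ltac:(lia)).
  rewrite cnt_full in H1. lia.
  intros n Hn. assert (H2 := fsum_mono f n K ltac:(lia)). lia.
Qed.

Lemma INR_mm_pos f k : 0 < INR (mm f k).
Proof. apply lt_0_INR. assert (H := mm_ge1 f k). lia. Qed.

Lemma cc_pos f k : 0 < cc f k.
Proof. unfold cc. apply Rinv_0_lt_compat, INR_mm_pos. Qed.

Lemma cc_lb f k n : (mm f k <= n + 2)%nat -> / (INR n + 2) <= cc f k.
Proof.
  intros H. unfold cc. apply Rinv_le_contravar. apply INR_mm_pos.
  replace (INR n + 2) with (INR (n + 2)) by (rewrite plus_INR; simpl; lra).
  apply le_INR; auto.
Qed.

Lemma cc_to0 f : forall eps, 0 < eps -> exists N, forall k, (N <= k)%nat -> cc f k < eps.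
Proof.
  intros eps He. destruct (INR_unbounded (/eps)) as [K HK].
  exists (K + fsum f K)%nat. intros k Hk. assert (H := mm_big f K k Hk).
  unfold cc. assert (HKp : 0 < INR K). { assert (0 < /eps) by (apply Rinv_0_lt_compat; lra). lra. }
  assert (INR K < INR (mm f k)) by (apply lt_INR; lia).
  apply Rlt_le_trans with (/ INR K).
  - apply Rinv_lt_contravar; [ apply Rmult_lt_0_compat; lra | lra].
  - rewrite <- (Rinv_inv eps). apply Rinv_le_contravar; [apply Rinv_0_lt_compat; lra | lra].
Qed.

Lemma even_double k : Nat.even (2 * k) = true.
Proof. induction k. reflexivity. replace (2 * S k)%nat with (S (S (2 * k))) by lia. simpl. exact IHk. Qed.

Lemma af_even f k : af f (2 * k) = cc f k.
Proof. unfold af. rewrite even_double, Nat.div2_double. reflexivity. Qed.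
Lemma af_odd f k : af f (S (2 * k)) = - cc f k.
Proof.
  unfold af. replace (Nat.even (S (2 * k))) with false.
  rewrite Nat.div2_succ_double. reflexivity.
  rewrite Nat.even_succ, <- Nat.negb_even, even_double. reflexivity.
Qed.

Lemma nat_split i : exists k, i = (2 * k)%nat \/ i = S (2 * k).
Proof.
  exists (Nat.div2 i). assert (H := Nat.div2_odd i). destruct (Nat.odd i); simpl in H; lia.
Qed.

Lemma abs_af f i : Rabs (af f i) = cc f (Nat.div2 i).
Proof.
  destruct (nat_split i) as [k [-> | ->]].
  - rewrite af_even, Nat.div2_double. apply Rabs_right. left; apply cc_pos.
  - rewrite af_odd, Nat.div2_succ_double, Rabs_Ropp. apply Rabs_right. left; apply cc_pos.
Qed.

Lemma af_sums f k : sum_f_R0 (af f) (2 * k) = cc f k /\ sum_f_R0 (af f) (S (2 * k)) = 0.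
Proof.
  induction k.
  - simpl. change (af f 0) with (af f (2 * 0)). change (af f 1) with (af f (S (2 * 0))).
    rewrite af_even, af_odd. split; lra.
  - replace (2 * S k)%nat with (S (S (2 * k))) by lia.
    destruct IHk as [_ IH].
    assert (E1 : af f (S (S (2 * k))) = cc f (S k)).
    { replace (S (S (2 * k))) with (2 * S k)%nat by lia. apply af_even. }
    assert (E2 : af f (S (S (S (2 * k)))) = - cc f (S k)).
    { replace (S (S (S (2 * k)))) with (S (2 * S k)) by lia. apply af_odd. }
    assert (S1 : sum_f_R0 (af f) (S (S (2 * k))) = sum_f_R0 (af f) (S (2 * k)) + af f (S (S (2 * k)))) by reflexivity.
    assert (S2 : sum_f_R0 (af f) (S (S (S (2 * k)))) = sum_f_R0 (af f) (S (S (2 * k))) + af f (S (S (S (2 * k))))) by reflexivity.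
    rewrite S2, S1, IH, E1, E2. split; lra.
Qed.

Lemma af_pos_sums f k :
  sum_f_R0 (pos_terms (af f)) (S (2 * k)) = sum_f_R0 (cc f) k /\
  sum_f_R0 (neg_terms (af f)) (S (2 * k)) = - sum_f_R0 (cc f) k.
Proof.
  assert (P0 : forall j, pos_terms (af f) (2 * j) = cc f j /\ neg_terms (af f) (2 * j) = 0).
  { intro j. unfold pos_terms, neg_terms. rewrite af_even. assert (H := cc_pos f j).
    destruct (Rlt_dec 0 (cc f j)); destruct (Rlt_dec (cc f j) 0); split; lra. }
  assert (P1 : forall j, pos_terms (af f) (S (2 * j)) = 0 /\ neg_terms (af f) (S (2 * j)) = - cc f j).
  { intro j. unfold pos_terms, neg_terms. rewrite af_odd. assert (H := cc_pos f j).
    destruct (Rlt_dec 0 (- cc f j)); destruct (Rlt_dec (- cc f j) 0); split; lra. }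
  induction k.
  - destruct (P0 0%nat) as [A B]; destruct (P1 0%nat) as [C D].
    cbn [sum_f_R0 Nat.mul Nat.add] in A, B, C, D |- *. split; lra.
  - replace (S (2 * S k)) with (S (S (S (2 * k)))) by lia.
    destruct IHk as [I1 I2]. destruct (P0 (S k)) as [A B]; destruct (P1 (S k)) as [C D].
    replace (2 * S k)%nat with (S (S (2 * k))) in A, B, C, D by lia.
    change (sum_f_R0 (pos_terms (af f)) (S (S (S (2 * k))))) with
      (sum_f_R0 (pos_terms (af f)) (S (2 * k)) + pos_terms (af f) (S (S (2 * k))) + pos_terms (af f) (S (S (S (2 * k))))).
    change (sum_f_R0 (neg_terms (af f)) (S (S (S (2 * k))))) with
      (sum_f_R0 (neg_terms (af f)) (S (2 * k)) + neg_terms (af f) (S (S (2 * k))) + neg_terms (af f) (S (S (S (2 * k))))).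
    rewrite (sum_S (cc f) k). split; lra.
Qed.

Lemma inv_succ_Q x : / INR (S x) = Q2R (Qmake 1 (Pos.of_succ_nat x)) /\
                     - / INR (S x) = Q2R (Qmake (-1) (Pos.of_succ_nat x)).
Proof.
  assert (E : IZR (Zpos (Pos.of_succ_nat x)) = INR (S x)).
  { rewrite Zpos_P_of_succ_nat, INR_IZR_INZ, Nat2Z.inj_succ. reflexivity. }
  rewrite <- E. unfold Q2R, Qnum, Qden. split; lra.
Qed.

Lemma cc_chunk f : forall K, exists n, (2*K+2 <= n)%nat /\
  forall k, (K < k <= n)%nat -> / (INR n + 2) <= cc f k.
Proof.
  intros K. exists (2*K+2)%nat. split; [lia|]. intros k Hk. apply cc_lb.
  assert (H := mm_le f k). lia.
Qed.

Lemma div2_ge i N : (2 * N <= i)%nat -> (N <= Nat.div2 i)%nat.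
Proof. intros H. assert (H' := Nat.div2_odd i). destruct (Nat.odd i); simpl in H'; lia. Qed.

Lemma div2_le i : (Nat.div2 i <= i)%nat.
Proof. assert (H' := Nat.div2_odd i). destruct (Nat.odd i); simpl in H'; lia. Qed.

Lemma af_Scc f : in_Scc (af f).
Proof.
  assert (Hcc0 : forall k, 0 <= cc f k) by (intros; left; apply cc_pos).
  split; [split|split].
  - intro i. unfold af, cc, mm. destruct (inv_succ_Q (cnt (fsum f) (Nat.div2 i) (S (Nat.div2 i)))) as [A B].
    destruct (Nat.even i); eauto.
  - intros eps He. destruct (cc_to0 f eps He) as [N HN]. exists (2 * N)%nat. intros i Hi.
    unfold Rdist. rewrite Rminus_0_r, abs_af. apply HN. apply div2_ge. lia.
  - exists 0. intros eps He. destruct (cc_to0 f eps He) as [N HN]. exists (2 * N)%nat. intros i Hi.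
    unfold Rdist, partial_sums. rewrite Rminus_0_r.
    destruct (nat_split i) as [k [-> | ->]]; destruct (af_sums f k) as [A B].
    + rewrite A, Rabs_right by (apply Rle_ge; auto). apply HN. lia.
    + rewrite B, Rabs_R0. lra.
  - split.
    + apply mono_cv_infty.
      { apply sum_mono. intro k; apply (pos_neg_abs (af f) k). }
      intros M. destruct (chunk (cc f) Hcc0 (cc_chunk f) M) as [n Hn].
      exists (S (2 * n)). unfold partial_sums. rewrite (proj1 (af_pos_sums f n)). exact Hn.
    + apply mono_cv_infty.
      { intros n m Hnm. unfold partial_sums. induction Hnm. lra. rewrite sum_S.
        destruct (pos_neg_abs (af f) (S m)) as [_ [_ [_ [H _]]]]. lra. }
      intros M. destruct (chunk (cc f) Hcc0 (cc_chunk f) M) as [n Hn].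
      exists (S (2 * n)). unfold partial_sums. rewrite (proj2 (af_pos_sums f n)). lra.
Qed.

Lemma strict_lt (e : nat -> nat) : (forall n, (e n < e (S n))%nat) ->
  forall a b, (a < b)%nat -> (e a < e b)%nat.
Proof. intros H a b Hab. induction Hab. apply H. specialize (H m). lia. Qed.

Lemma strict_le (e : nat -> nat) : (forall n, (e n < e (S n))%nat) ->
  forall a b, (a <= b)%nat -> (e a <= e b)%nat.
Proof. intros H a b Hab. destruct (Nat.eq_dec a b). subst; lia. assert (H' := strict_lt e H a b ltac:(lia)). lia. Qed.

Lemma enum_le X e1 e2 : enumerates X e1 -> enumerates X e2 -> forall n, (e1 n <= e2 n)%nat.
Proof.
  intros [S1 I1] [S2 I2]. induction n.
  - destruct (proj1 (I1 (e2 0%nat)) (proj2 (I2 _) (ex_intro _ 0%nat eq_refl))) as [k Hk].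
    rewrite <- Hk. apply strict_le; auto; lia.
  - destruct (proj1 (I1 (e2 (S n))) (proj2 (I2 _) (ex_intro _ (S n) eq_refl))) as [k Hk].
    assert (Hk' : (n < k)%nat).
    { destruct (le_lt_dec k n); auto. assert (H := strict_le e1 S1 k n l). specialize (S2 n). lia. }
    rewrite <- Hk. apply strict_le; auto.
Qed.

Lemma enum_unique X e1 e2 : enumerates X e1 -> enumerates X e2 -> forall n, e1 n = e2 n.
Proof. intros H1 H2 n. assert (A := enum_le X e1 e2 H1 H2 n). assert (B := enum_le X e2 e1 H2 H1 n). lia. Qed.

Lemma L2 f X e : enumerates X e -> abs_convergent (fun n => af f (e n)) -> dominates e f.
Proof.
  intros [Se Ie] [Hc Hnc]. apply NNPP. intro Hnd. apply Hnc.
  apply cond_of_unbounded; auto.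
  apply chunk. { intros; apply Rabs_pos. }
  intros K.
  assert (Hex : exists n, (2*K+2 <= n)%nat /\ (e n < f n)%nat).
  { apply NNPP. intro Hne. apply Hnd. exists (2*K+2)%nat. intros n Hn.
    destruct (le_lt_dec (f n) (e n)); auto. exfalso. apply Hne. eauto. }
  destruct Hex as [n [Hn Hen]]. exists n. split; auto. intros k Hk.
  rewrite abs_af. apply cc_lb.
  assert (H1 := strict_le e Se k n ltac:(lia)).
  assert (H2 := div2_le (e k)). assert (H3 := fsum_ge f n).
  assert (H4 := mm_le_n f (Nat.div2 (e k)) n ltac:(lia)). lia.
Qed.

Definition hs (g : nat -> nat) (n : nat) : nat := (2 * (fsum g n + n))%nat.
Definition Xs (g : nat -> nat) (i : nat) : bool :=
  if excluded_middle_informative (exists n, hs g n = i) then true else false.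
Definition fa (a : nat -> R) (n : nat) : nat :=
  epsilon (inhabits 0%nat) (fun N => forall i, (N <= i)%nat -> Rabs (a i) <= (/2)^n).

Lemma hs_strict g n : (hs g n < hs g (S n))%nat.
Proof. unfold hs. simpl fsum. lia. Qed.

Lemma Xs_infcoinf g : inf_coinf (Xs g).
Proof.
  split.
  - intro n. exists (hs g n). split. unfold hs; lia.
    unfold Xs. destruct (excluded_middle_informative _) as [_|C]; auto. exfalso; eauto.
  - intro n. exists (S (2 * n)). split. lia.
    unfold Xs. destruct (excluded_middle_informative _) as [[k Hk]|C]; auto. unfold hs in Hk. lia.
Qed.

Lemma Xs_enum g : enumerates (Xs g) (hs g).
Proof.
  split. apply hs_strict. intro i. unfold Xs.
  destruct (excluded_middle_informative _) as [H|H]; split; intro H'.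
  - exact H.
  - reflexivity.
  - discriminate.
  - contradiction.
Qed.

Lemma L1 a g : Un_cv a 0 -> dominates g (fa a) -> sub_abs_convergent (Xs g) a.
Proof.
  intros Ha [N HN]. exists (hs g). split. apply Xs_enum.
  apply abs_conv_of_geom. exists N. intros n Hn.
  assert (Hspec : forall i, (fa a n <= i)%nat -> Rabs (a i) <= (/2)^n).
  { unfold fa. apply epsilon_spec.
    destruct (Ha ((/2)^n) ltac:(apply pow_lt; lra)) as [M HM]. exists M. intros i Hi.
    specialize (HM i Hi). unfold Rdist in HM. rewrite Rminus_0_r in HM. lra. }
  apply Hspec. specialize (HN n Hn). assert (H := fsum_ge g n). unfold hs. lia.
Qed.
Lemma img_le {A B : Type} (b0 : B) (P : B -> Prop) (F : B -> A) :
  le_card (fun x => exists b, P b /\ x = F b) P.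
Proof.
  exists (fun x => epsilon (inhabits b0) (fun b => P b /\ x = F b)).
  split.
  - intros x Hx. exact (proj1 (epsilon_spec (inhabits b0) _ Hx)).
  - intros x y Hx Hy Hxy.
    rewrite (proj2 (epsilon_spec (inhabits b0) _ Hx)), (proj2 (epsilon_spec (inhabits b0) _ Hy)), Hxy. reflexivity.
Qed.

Definition En (X : nat -> bool) : nat -> nat :=
  epsilon (inhabits (fun n : nat => n)) (enumerates X).

Lemma dom_transfer X e f : enumerates X e -> dominates e f -> dominates (En X) f.
Proof.
  intros He [N HN]. assert (H := epsilon_spec (inhabits (fun n : nat => n)) (enumerates X) (ex_intro _ e He)).
  fold (En X) in H. exists N. intros n Hn. rewrite <- (enum_unique X e (En X) He H n). auto.
Qed.

Theorem mainTheorem6 :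
  charac_eq ss_ac_family dominating_family /\
  charac_eq ss_ac_perp_family unbounded_family.
Proof.
  split; split.
  - intros D HD. exists (fun X => exists g, D g /\ X = Xs g).
    split; [| apply img_le; exact (fun n : nat => n)].
    split.
    + intros X [g [_ ->]]. apply Xs_infcoinf.
    + intros a [[_ Ha0] _]. destruct (HD (fa a)) as [g [Dg Hdom]].
      exists (Xs g). split; eauto. apply L1; auto.
  - intros XX [HXi HXa]. exists (fun g => exists X, XX X /\ g = En X).
    split; [| apply img_le; exact (fun _ : nat => true)].
    intros f. destruct (HXa (af f) (af_Scc f)) as [X [HX [e [He Hab]]]].
    exists (En X). split; eauto. apply dom_transfer with e; auto. apply (L2 f X e He Hab).
  - intros B HB. exists (fun a => exists f, B f /\ a = af f).
    split; [| apply img_le; exact (fun n : nat => n)].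
    split.
    + intros a [f [_ ->]]. apply af_Scc.
    + intros [X [HX Hall]]. apply HB. exists (En X). intros f Bf.
      destruct (Hall (af f) (ex_intro _ f (conj Bf eq_refl))) as [e [He Hab]].
      apply dom_transfer with e; auto. apply (L2 f X e He Hab).
  - intros A [HA Hno]. exists (fun f => exists a, A a /\ f = fa a).
    split; [| apply img_le; exact (fun _ : nat => 0)].
    intros [g Hg]. apply Hno. exists (Xs g). split. apply Xs_infcoinf.
    intros a Aa. apply L1. destruct (HA a Aa) as [[_ H] _]; exact H. apply Hg. eauto.
Qed.
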